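(* Let $m\in\mathbb{N}$. There is a constant $C_m$ depending only on $m$ such that for all $0<\rho\le1$, $$I(\rho)=\frac1\rho\int_1^\infty e^{-\frac12 s^{1/\rho}}\,s^{\frac m\rho+1}\,ds\le C_m.$$ *)

(* Defs.v *)
From HB Require Import structures.
From mathcomp Require Import all_boot all_order all_algebra.
From mathcomp Require Import all_classical all_reals all_analysis.
Set Implicit Arguments. Unset Strict Implicit. Unset Printing Implicit Defensive.

(* Main.v *)
Require Import Defs.
From HB Require Import structures.
From mathcomp Require Import all_boot all_order all_algebra.
From mathcomp Require Import all_classical all_reals all_analysis.
From mathcomp Require Import ring lra.
From mathcomp Require Import measurable_realfun.
Import Order.TTheory GRing.Theory Num.Theory.
Import numFieldNormedType.Exports.
Local Open Scope classical_set_scope.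
Local Open Scope ring_scope.

Lemma poly_exp_bound (R : realType) (n : nat) (t : R) : 0 <= t ->
  t ^+ n.+1 * expR (- t / 4) <= (4 * n.+1%:R) ^+ n.+1.
Proof.
move=> t0.
set N : R := 4 * n.+1%:R.
have N0 : 0 < N by rewrite /N mulr_gt0 // ltr0n.
have e1 : (t / N) ^+ n.+1 <= expR (t / 4).
  have -> : t / 4 = n.+1%:R * (t / N).
    by rewrite /N; field; rewrite nat1r pnatr_eq0.
  rewrite (expRM_natl n.+1 (t / N)); apply: lerXn2r.
  - by rewrite nnegrE divr_ge0 // ltW.
  - by rewrite nnegrE ltW // expR_gt0.
  - by apply: le_trans (expR_ge1Dx _); rewrite lerDr.
have -> : t ^+ n.+1 = N ^+ n.+1 * (t / N) ^+ n.+1.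
  by rewrite -exprMn mulrC divfK // gt_eqF.
rewrite -mulrA mulNr expRN.
rewrite -[leRHS]mulr1; apply: ler_wpM2l; first by rewrite exprn_ge0 // ltW.
by rewrite ler_pdivrMr ?expR_gt0 // mul1r.
Qed.

Lemma pointwise (R : realType) (m : nat) (rho s : R) : 0 < rho <= 1 -> 1 <= s ->
  expR (- (s `^ rho^-1) / 2) * s `^ (m%:R / rho + 1) <=
  (4 * m.+1%:R) ^+ m.+1 * (expR (- (s `^ rho^-1 / 4)) * s `^ (rho^-1 - 1)).
Proof.
move=> /andP[r0 r1] s1.
set b := rho^-1.
have hb : 1 <= b by rewrite /b invf_ge1.
have s0 : 0 < s by apply: lt_le_trans s1.
have sn0 : s != 0 by rewrite gt_eqF.
set t := s `^ b.
have hst : s <= t by apply: le1r_powR.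
have t0 : 0 < t by apply: lt_le_trans hst.
have -> : s `^ (m%:R / rho + 1) = t ^+ m * s.
  rewrite powRD; last by rewrite sn0 implybT.
  by rewrite powRr1 ?ltW // [m%:R / rho]mulrC powRrM powR_mulrn ?powR_ge0.
have -> : s `^ (b - 1) = t / s.
  by rewrite powRB ?sn0 ?implybT // powRr1 // ltW.
set E := expR (- (t / 4)).
have E0 : 0 < E by apply: expR_gt0.
have -> : expR (- t / 2) = E * E.
  by rewrite -expRD; congr expR; lra.
have hK : t ^+ m.+1 * E <= (4 * m.+1%:R) ^+ m.+1.
  by have := @poly_exp_bound R m t (ltW t0); rewrite mulNr.
have -> : E * E * (t ^+ m * s) = (t ^+ m.+1 * E) * (E * (t / s)) * (s * s / (t * t)).
  by rewrite exprS; field; rewrite sn0 gt_eqF.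
apply: le_trans (_ : _ <= (t ^+ m.+1 * E) * (E * (t / s))) _.
  rewrite -[leRHS]mulr1; apply: ler_wpM2l.
    apply: mulr_ge0; [apply: mulr_ge0; [exact: exprn_ge0 (ltW t0)| exact: ltW E0] | apply: mulr_ge0; [exact: ltW E0 | exact: divr_ge0 (ltW t0) (ltW s0)]].
  rewrite ler_pdivrMr ?mulr_gt0 // mul1r.
  by apply: ler_pM => //; exact: ltW.
apply: ler_wpM2r => //.
apply: mulr_ge0; [exact: ltW E0 | exact: divr_ge0 (ltW t0) (ltW s0)].
Qed.
Lemma dF (R : realType) (c b x : R) : 0 < x ->
  is_derive x 1 (fun s => c * expR (- (s `^ b / 4)))
     (c * (expR (- (x `^ b / 4)) * (- (b * x `^ (b - 1) / 4)))).
Proof.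
move=> x0.
have h1 : is_derive x 1 (fun s : R => - (s `^ b / 4)) (- (b * x `^ (b - 1) / 4)).
  have := is_deriveN (is_deriveM (is_derive1_powR b x0) (is_derive_cst (4^-1 : R) x 1)).
  by rewrite /= scaler0 add0r /GRing.scale /= [4^-1 * _]mulrC => H; exact: H.
have h2 : is_derive (- (x `^ b / 4)) 1 (fun u : R => c * expR u) (c * expR (- (x `^ b / 4))).
  have := is_deriveM (is_derive_cst c (- (x `^ b / 4)) 1) (is_derive_expR (- (x `^ b / 4))).
  by rewrite /= scaler0 addr0 /GRing.scale /= => H; exact: H.
have := @is_derive1_comp R (fun u => c * expR u) (fun s => - (s `^ b / 4)) x _ _ h2 h1.
by rewrite mulrA.
Qed.

Theorem lemma4 (R : realType) (m : nat) :
  exists C : R, forall rho : R, 0 < rho <= 1 ->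
    ((rho^-1)%:E *
      \int[@lebesgue_measure R]_(s in `[1%R, +oo[%classic)
         (expR (- (s `^ rho^-1) / 2) * s `^ (m%:R / rho + 1))%:E <= C%:E)%E.
Proof.
set K : R := (4 * m.+1%:R) ^+ m.+1.
have K0 : 0 <= K by rewrite /K exprn_ge0 // mulr_ge0 // ler0n.
exists (4 * K) => rho /[dup] rho01 /andP[r0 r1].
set b := rho^-1.
pose g := fun s : R => K * (expR (- (s `^ b / 4)) * s `^ (b - 1)).
pose F := fun s : R => (- (4 * K * rho)) * expR (- (s `^ b / 4)).
have dFg (x : R) : 0 < x -> is_derive x 1 F (g x).
  move=> x0.
  have -> : g x = - (4 * K * rho) * (expR (- (x `^ b / 4)) * (- (b * x `^ (b - 1) / 4))).
    by rewrite /g /b; field; rewrite gt_eqF.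
  exact: dF.
have cpow (a x : R) : 0 < x -> continuous_at x (fun s : R => s `^ a).
  move=> x0; apply: differentiable_continuous; apply/derivable1_diffP.
  by apply: derivable_powR; rewrite in_itv/= andbT.
have cg (x : R) : 0 < x -> continuous_at x g.
  move=> x0.
  have h : continuous_at x (fun s : R => - (s `^ b / 4)).
    by apply: cvgN; apply: cvgM; [exact: cpow | exact: cvg_cst].
  have h1 : continuous_at x (fun s => expR (- (s `^ b / 4))).
    have he : continuous_at (- (x `^ b / 4)) (@expR R) by exact: continuous_expR.
    exact: (continuous_comp h he).
  have h3 : continuous_at x (fun s : R => expR (- (s `^ b / 4)) * s `^ (b - 1)).
    by apply: cvgM; [exact: h1 | exact: cpow].
  by apply: cvgM; [exact: cvg_cst | exact: h3].
have mD : measurable (`[1%R, +oo[%classic : set R) by exact: measurable_itv.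
have mf : measurable_fun setT (fun s : R => expR (- (s `^ b) / 2) * s `^ (m%:R / rho + 1)).
  apply: measurable_realfun.measurable_funM; last exact: measurable_realfun.measurable_powR.
  apply: measurableT_comp; first exact: measurable_realfun.measurable_expR.
  apply: measurable_realfun.measurable_funM => //.
  apply: measurableT_comp => //; exact: measurable_realfun.measurable_powR.
have mg : measurable_fun setT g.
  apply: measurable_realfun.measurable_funM => //.
  apply: measurable_realfun.measurable_funM; last exact: measurable_realfun.measurable_powR.
  apply: measurableT_comp; first exact: measurable_realfun.measurable_expR.
  apply: measurableT_comp => //.
  apply: measurable_realfun.measurable_funM => //; exact: measurable_realfun.measurable_powR.
have le1 : (\int[@lebesgue_measure R]_(s in `[1%R, +oo[%classic)
         (expR (- (s `^ b) / 2) * s `^ (m%:R / rho + 1))%:E <=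
       \int[@lebesgue_measure R]_(s in `[1%R, +oo[%classic) (g s)%:E)%E.
  apply: ge0_le_integral => //.
  - by move=> x _; rewrite lee_fin mulr_ge0 ?expR_ge0 ?powR_ge0.
  - by apply/measurable_EFinP; exact: measurable_funS mf.
  - by apply/measurable_EFinP; exact: measurable_funS mg.
  - move=> x; rewrite /= in_itv /= andbT => x1.
    by rewrite lee_fin; exact: pointwise.
have eqg : (\int[@lebesgue_measure R]_(s in `[1%R, +oo[%classic) (g s)%:E =
       (0%:E - (F 1)%:E))%E.
  apply: ge0_continuous_FTC2y.
  - move=> x x1; rewrite /g mulr_ge0 // mulr_ge0 ?expR_ge0 ?powR_ge0 //.
  - apply/continuous_in_subspaceT => x /[1!inE]; rewrite /= in_itv /= andbT => x1.
    by apply: cg; apply: lt_le_trans x1.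
  - have inner : (fun x : R => x `^ b / 4) @ +oo%R --> +oo%R.
      apply/cvgryPge => A; near=> x.
      have x1 : 1 <= x by near: x; apply: nbhs_pinfty_ge; rewrite num_real.
      have x4 : 4 * A <= x by near: x; apply: nbhs_pinfty_ge; rewrite num_real.
      rewrite ler_pdivlMr // [A * _]mulrC; apply: le_trans x4 _.
      apply: le1r_powR => //; rewrite /b invf_ge1 //.
    have he : (fun x : R => expR (- (x `^ b / 4))) @ +oo%R --> 0.
      exact: (@cvg_comp _ _ _ _ (fun y : R => expR (- y)) _ _ _ inner (@cvgr_expR R)).
    rewrite -(mulr0 (- (4 * K * rho))).
    by apply: cvgM; [exact: cvg_cst | exact: he].
  - by move=> x x1; case: (dFg x (lt_trans ltr01 x1)).
  - apply: cvg_at_right_filter; apply: differentiable_continuous; apply/derivable1_diffP.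
    by case: (dFg 1 ltr01).
  - move=> x; rewrite in_itv /= andbT => x1; rewrite derive1E.
    by case: (dFg x (lt_trans ltr01 x1)).
apply: le_trans (lee_wpmul2l _ le1) _; first by rewrite lee_fin invr_ge0 ltW.
rewrite eqg -EFinB -EFinM lee_fin /F powR1 /= sub0r mulNr opprK.
have -> : b * (4 * K * rho * expR (- (1 / 4))) = 4 * K * expR (- (1 / 4)).
  by rewrite /b; field; rewrite gt_eqF.
rewrite -[leRHS]mulr1; apply: ler_wpM2l; first by rewrite mulr_ge0.
by rewrite expR_le1 oppr_le0 divr_ge0.
Unshelve. all: by end_near.
Qed.
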